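(* Let $p$ be a prime and $(K,|\cdot|)$ an ultrametric field of residue characteristic $p$. Let $\lambda\in K$ with $|\lambda|=1$ such that the order $q$ of $\widetilde\lambda$ in $\widetilde K^*$ is finite, and let $f(z)=\lambda z+\cdots\in\mathcal{O}_K[[z]]$. (1) Suppose $\lambda^q\ne1$ and let $w_0$ be a periodic point of $f$ of minimal period $q$ (with $w_0\ne0$ if $q=1$). Then $|w_0|\ge|\lambda^q-1|^{1/q}$, with equality if and only if $\mathrm{wideg}(f^q(z)-z)=q+1$. Moreover, if equality holds, then the cycle containing $w_0$ is the only cycle of minimal period $q$ of $f$ in $\mathfrak{m}_K\setminus\{0\}$, and every point $w_0'$ of this cycle satisfies $|w_0'|=|\lambda^q-1|^{1/q}$. (2) Let $n\ge1$ be an integer with $\lambda^{qp^n}\ne1$ and let $z_0$ be a periodic point of $f$ of minimal period $qp^n$. Then $|z_0|\ge\left|\frac{\lambda^{qp^n}-1}{\lambda^{qp^{n-1}}-1}\right|^{1/(qp^n)}$, with equality if and only if $\mathrm{wideg}\left(\frac{f^{qp^n}(z)-z}{f^{qp^{n-1}}(z)-z}\right)=qp^n$. Moreover, if equality holds, then the cycle containing $z_0$ is the only cycle of minimal period $qp^n$ of $f$, and every point $z_0'$ in this cycle satisfies the equality with $z_0$ replaced by $z_0'$.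
   Context: $\mathcal{O}_K=\{|z|\le1\}$, $\mathfrak{m}_K=\{|z|<1\}$, $\widetilde K=\mathcal{O}_K/\mathfrak{m}_K$. Periodic points are taken in $\mathfrak{m}_K$, which $f$ maps to itself. For $h\in\mathcal{O}_K[[z]]$, the Weierstrass degree $\mathrm{wideg}(h)$ is the order (lowest degree of a nonzero term, $+\infty$ for $0$) of the reduction $\widetilde h\in\widetilde K[[\zeta]]$. The power series $f^{qp^{n-1}}(z)-z$ divides $f^{qp^n}(z)-z$ in $\mathcal{O}_K[[z]]$, so the quotient above lies in $\mathcal{O}_K[[z]]$. *)

(* Defs.v *)
From HB Require Import structures.
From mathcomp Require Import all_boot all_order all_algebra.
From mathcomp Require Import reals exp.
From Stdlib Require Import ClassicalEpsilon.

Set Implicit Arguments.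
Unset Strict Implicit.
Unset Printing Implicit Defensive.
Import Order.TTheory GRing.Theory Num.Theory.
Local Open Scope ring_scope.

Section Defs.
Variables (K : fieldType) (R : realType) (abs : K -> R).

Definition ultrametric_abs : Prop :=
  [/\ abs 0 = 0,
      (forall x, abs x = 0 -> x = 0),
      (forall x y, abs (x * y) = abs x * abs y) &
      (forall x y, abs (x + y) <= Num.max (abs x) (abs y))].

Definition abs_complete : Prop :=
  forall u : nat -> K,
    (forall e : R, 0 < e -> exists N, forall m n, (N <= m)%N -> (N <= n)%N ->
        abs (u m - u n) < e) ->
    exists l, forall e : R, 0 < e -> exists N, forall n, (N <= n)%N ->
        abs (u n - l) < e.

Definition series := nat -> K.

Definition integral (a : series) : Prop := forall n, abs (a n) <= 1.

Definition sX : series := fun n => (n == 1)%:R.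

Definition smul (a b : series) : series :=
  fun n => \sum_(i < n.+1) a i * b (n - i)%N.

Fixpoint spow (a : series) (k : nat) : series :=
  if k is k'.+1 then smul a (spow a k') else (fun n => (n == 0)%:R).

(* formal composition g o h (h has zero constant term) *)
Definition scomp (g h : series) : series :=
  fun n => \sum_(k < n.+1) g k * spow h k n.

Fixpoint siter (f : series) (m : nat) : series :=
  if m is m'.+1 then scomp f (siter f m') else sX.

(* wideg h = n : the reduction of h has order n *)
Definition wideg_eq (h : series) (n : nat) : Prop :=
  ~ (abs (h n) < 1) /\ forall k, (k < n)%N -> abs (h k) < 1.

Definition ps_sum (a : series) (z s : K) : Prop :=
  forall e : R, 0 < e -> exists N, forall n, (N <= n)%N ->
    abs (s - \sum_(i < n) a i * z ^+ i) < e.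

(* the value of a at z (meaningful when the series converges) *)
Definition ps_eval (a : series) (z : K) : K :=
  epsilon (inhabits 0) (fun s => ps_sum a z s).

Definition min_period (F : K -> K) (w : K) (m : nat) : Prop :=
  (0 < m)%N /\ iter m F w = w /\ forall k, (0 < k < m)%N -> iter k F w <> w.

End Defs.

(* Main.v *)
Require Import Defs.
From HB Require Import structures.
From mathcomp Require Import all_boot all_order all_algebra.
From mathcomp Require Import reals exp.
From Stdlib Require Import ClassicalEpsilon FunctionalExtensionality.
From mathcomp Require Import ring lra zify.
Import Order.TTheory GRing.Theory Num.Theory.
Local Open Scope ring_scope.
Set Implicit Arguments.
Unset Strict Implicit.
Unset Printing Implicit Defensive.

Module Pre.
Section Abs.
Variables (K : fieldType) (R : realType) (abs : K -> R).
Hypothesis habs : ultrametric_abs abs.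

Lemma abs0 : abs 0 = 0. Proof. by case: habs. Qed.
Lemma abs_eq0 x : abs x = 0 -> x = 0. Proof. by case: habs => _ h _ _; apply: h. Qed.
Lemma absM x y : abs (x * y) = abs x * abs y. Proof. by case: habs => _ _ h _; apply: h. Qed.
Lemma absD x y : abs (x + y) <= Num.max (abs x) (abs y). Proof. by case: habs => _ _ _ h; apply: h. Qed.

Lemma abs1 : abs 1 = 1.
Proof.
have h := absM 1 1; rewrite mulr1 in h.
have h1 : abs 1 != 0 by apply/eqP => /abs_eq0/eqP; rewrite oner_eq0.
by apply: (mulIf h1); rewrite mul1r -h.
Qed.

Lemma absN1_sq : abs (-1) * abs (-1) = 1.
Proof. by rewrite -absM mulrNN mulr1 abs1. Qed.

Lemma absN1_cases : abs (-1) = 1 \/ abs (-1) = -1.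
Proof.
have h := absN1_sq.
have : (abs (-1) - 1) * (abs (-1) + 1) = 0.
  by rewrite mulrDr mulr1 mulrBl h mul1r addrA subrK subrr.
move/eqP; rewrite mulf_eq0 => /orP[/eqP|/eqP] e.
  by left; apply/eqP; rewrite -subr_eq0 e.
by right; apply/eqP; rewrite -addr_eq0 e.
Qed.

Lemma absN1_of (p : nat) : (0 < p)%N -> abs (p%:R : K) < 1 -> abs (-1) = 1.
Proof.
move=> p0 hp; case: absN1_cases => // hm.
have absN x : abs (- x) = - abs x by rewrite -mulN1r absM hm mulN1r.
have key : forall n, (n%:R : K) = 0 \/ abs (n%:R : K) = 1.
  elim=> [|n [IH|IH]]; first by left.
    by right; rewrite -addn1 natrD IH add0r abs1.
  right; have h1 := absD (n%:R) 1.
  rewrite IH abs1 maxxx in h1.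
  have h2 := absD (- n%:R) (- 1).
  rewrite !absN IH abs1 maxxx -opprD absN lerN2 in h2.
  by apply/eqP; rewrite eq_le -addn1 natrD h1 h2.
case: (key p) => hp0; last by rewrite hp0 ltxx in hp.
case: p p0 hp hp0 => [|p] // _ _ hp0.
have : (p%:R : K) = -1 by rewrite -natr1 in hp0; rewrite -(addrK 1 (p%:R)) hp0 sub0r.
move=> e; case: (key p); rewrite e.
  by move/eqP; rewrite oppr_eq0 oner_eq0.
by [].
Qed.
End Abs.
End Pre.

Lemma pz (R : realType) (r e : R) : 0 <= r -> r < 1 -> 0 < e ->
  exists N, forall n, (N <= n)%N -> r ^+ n < e.
Proof.
move=> r0 r1 e0.
have [->|rn0] := eqVneq r 0.
  by exists 1%N => n n1; rewrite expr0n; case: n n1.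
have rp : 0 < r by rewrite lt_neqAle eq_sym rn0 r0.
set d := r^-1 - 1.
have d0 : 0 < d by rewrite /d subr_gt0 invf_gt1.
have bern : forall n, 1 + n%:R * d <= (1 + d) ^+ n.
  elim=> [|n IH]; first by rewrite mul0r addr0 expr0.
  rewrite exprS -natr1 mulrDl mul1r.
  have h1 : 0 <= (1 + d) ^+ n by apply: exprn_ge0; lra.
  have : (1 + d) * (1 + n%:R * d) <= (1 + d) * (1 + d) ^+ n.
    by apply: ler_wpM2l => //; lra.
  have : 0 <= n%:R * d * d by rewrite !mulr_ge0 // ltW.
  lra.
have hb : e^-1 / d < (Num.Def.archi_bound (e^-1 / d))%:R.
  by apply: archi_boundP; rewrite ltW // divr_gt0 // invr_gt0.
set N := Num.Def.archi_bound _ in hb.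
exists N => n nN.
have hN : (N%:R : R) <= n%:R by rewrite ler_nat.
have h1 : e^-1 < n%:R * d.
  by rewrite -ltr_pdivrMr //; apply: lt_le_trans hb hN.
have h2 : e^-1 < (1 + d) ^+ n by apply: lt_le_trans (bern n); lra.
have e1 : 1 + d = r^-1 by rewrite /d addrC subrK.
rewrite e1 exprVn in h2.
rewrite -[r ^+ n]invrK -[e]invrK ltf_pV2 ?posrE //.
  by rewrite invr_gt0 exprn_gt0.
by rewrite invr_gt0.
Qed.

Section Abs2.
Variables (K : fieldType) (R : realType) (abs : K -> R).
Hypothesis habs : ultrametric_abs abs.
Hypothesis hN1 : abs (-1) = 1.

Lemma abs0 : abs 0 = 0. Proof. by case: habs. Qed.
Lemma abs_eq0 x : abs x = 0 -> x = 0. Proof. by case: habs => _ h _ _; apply: h. Qed.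
Lemma absM x y : abs (x * y) = abs x * abs y. Proof. by case: habs => _ _ h _; apply: h. Qed.
Lemma absD x y : abs (x + y) <= Num.max (abs x) (abs y). Proof. by case: habs => _ _ _ h; apply: h. Qed.
Lemma abs1 : abs 1 = 1.
Proof.
have h := absM 1 1; rewrite mulr1 in h.
have h1 : abs 1 != 0 by apply/eqP => /abs_eq0/eqP; rewrite oner_eq0.
by apply: (mulIf h1); rewrite mul1r -h.
Qed.
Lemma absN x : abs (- x) = abs x.
Proof. by rewrite -mulN1r absM hN1 mul1r. Qed.
Lemma abs_ge0 x : 0 <= abs x.
Proof. by have := absD x (- x); rewrite subrr abs0 absN maxxx. Qed.
Lemma absB x y : abs (x - y) <= Num.max (abs x) (abs y).
Proof. by rewrite -(absN y) absD. Qed.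
Lemma absBC x y : abs (x - y) = abs (y - x).
Proof. by rewrite -absN opprB. Qed.
Lemma absX x n : abs (x ^+ n) = abs x ^+ n.
Proof. by elim: n => [|n IH]; rewrite ?expr0 ?abs1 // !exprS absM IH. Qed.
Lemma abs_neq0 x : x != 0 -> 0 < abs x.
Proof.
move=> xn; rewrite lt_neqAle abs_ge0 andbT; apply/eqP => h.
by move/eqP: xn; apply; apply: abs_eq0.
Qed.
Lemma absV x : abs (x^-1) = (abs x)^-1.
Proof.
have [->|xn] := eqVneq x 0; first by rewrite invr0 abs0 invr0.
have h : abs x * abs x^-1 = 1 by rewrite -absM mulfV // abs1.
have hx := abs_neq0 xn.
by rewrite -[abs x^-1]mul1r -(mulVf (lt0r_neq0 hx)) -mulrA h mulr1.
Qed.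
Lemma absDle x y c : abs x <= c -> abs y <= c -> abs (x + y) <= c.
Proof. by move=> h1 h2; apply: le_trans (absD x y) _; rewrite ge_max h1 h2. Qed.
Lemma absDlt x y c : abs x < c -> abs y < c -> abs (x + y) < c.
Proof. by move=> h1 h2; apply: le_lt_trans (absD x y) _; rewrite gt_max h1 h2. Qed.
Lemma absBle x y c : abs x <= c -> abs y <= c -> abs (x - y) <= c.
Proof. by move=> h1 h2; apply: absDle; rewrite ?absN. Qed.
Lemma absBlt x y c : abs x < c -> abs y < c -> abs (x - y) < c.
Proof. by move=> h1 h2; apply: absDlt; rewrite ?absN. Qed.

Lemma abs_sum_le (I : Type) (r : seq I) (P : pred I) (F : I -> K) c :
  0 <= c -> (forall i, P i -> abs (F i) <= c) -> abs (\sum_(i <- r | P i) F i) <= c.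
Proof.
move=> c0 h; apply: (big_ind (fun x => abs x <= c)) => //.
- by rewrite abs0.
- by move=> x y; apply: absDle.
Qed.
Lemma abs_sum_lt (I : Type) (r : seq I) (P : pred I) (F : I -> K) c :
  0 < c -> (forall i, P i -> abs (F i) < c) -> abs (\sum_(i <- r | P i) F i) < c.
Proof.
move=> c0 h; apply: (big_ind (fun x => abs x < c)) => //.
- by rewrite abs0.
- by move=> x y; apply: absDlt.
Qed.

Lemma abs_strict x y : abs (x - y) < abs y -> abs x = abs y.
Proof.
move=> h.
have e1 : x = y + (x - y) by rewrite addrC subrK.
have e2 : y = x - (x - y) by rewrite opprB addrC subrK.
have h1 : abs x <= abs y by rewrite {1}e1; apply: absDle => //; apply: ltW.
have h2 : abs y <= abs x.
  rewrite leNgt; apply/negP => hlt.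
  have := absB x (x - y); rewrite -e2 => h3.
  have : Num.max (abs x) (abs (x - y)) < abs y by rewrite gt_max hlt h.
  by move=> /(le_lt_trans h3); rewrite ltxx.
by apply/eqP; rewrite eq_le h1 h2.
Qed.

Lemma lim0 x : (forall e : R, 0 < e -> abs x < e) -> x = 0.
Proof.
move=> h; apply: abs_eq0; apply/eqP; rewrite eq_le abs_ge0 andbT.
rewrite leNgt; apply/negP => hx; by have := h _ hx; rewrite ltxx.
Qed.

Lemma le_of_max (x c : R) : 0 <= c -> (forall e, 0 < e -> x <= Num.max e c) -> x <= c.
Proof.
move=> c0 h; rewrite leNgt; apply/negP => hx.
have e0 : 0 < (x - c) / 2 by apply: divr_gt0; lra.
have := h _ e0; rewrite le_max => /orP[]; lra.
Qed.


Hypothesis hcompl : abs_complete abs.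
Local Notation ser := (series K).
Definition psum (a : ser) z n := \sum_(i < n) a i * z ^+ i.
Definition bnd (a : ser) := forall n, abs (a n) <= 1.
Local Notation PS := (ps_sum abs).
Local Notation EV := (ps_eval abs).

Lemma psumS a z n : psum a z n.+1 = psum a z n + a n * z ^+ n.
Proof. by rewrite /psum big_ord_recr. Qed.
Lemma psum0 a z : psum a z 0 = 0.
Proof. by rewrite /psum big_ord0. Qed.

Lemma powle z n m : abs z <= 1 -> (n <= m)%N -> abs z ^+ m <= abs z ^+ n.
Proof. by move=> z1 nm; apply: ler_wiXn2l => //; apply: abs_ge0. Qed.

Lemma psum_diff a z n m : bnd a -> abs z <= 1 -> (n <= m)%N ->
  abs (psum a z m - psum a z n) <= abs z ^+ n.
Proof.
move=> ha z1; elim: m => [|m IH] nm.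
  by rewrite leqn0 in nm; rewrite (eqP nm) subrr abs0 expr0.
case: (ltngtP n m.+1) nm => // [nm|<-] _; last by rewrite subrr abs0 exprn_ge0 ?abs_ge0.
rewrite psumS addrAC; apply: absDle; first exact: IH.
rewrite absM absX; apply: le_trans (powle (n:=n) (m:=m) z1 nm).
rewrite -[X in _ <= X]mul1r; apply: ler_wpM2r; [exact: exprn_ge0 (abs_ge0 _)|exact: ha].
Qed.

Lemma ps_conv a z : bnd a -> abs z < 1 -> exists s, PS a z s.
Proof.
move=> ha z1.
have [l hl] : exists l, forall e : R, 0 < e -> exists N, forall n, (N <= n)%N ->
        abs (psum a z n - l) < e.
  apply: hcompl => e e0.
  have [N hN] := pz (abs_ge0 z) z1 e0.
  exists N => m n mN nN.
  case: (leqP n m) => nm.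
    by apply: le_lt_trans (psum_diff ha (ltW z1) nm) (hN _ nN).
  rewrite absBC; apply: le_lt_trans (psum_diff ha (ltW z1) (ltnW nm)) (hN _ mN).
exists l => e e0; have [N hN] := hl e e0; exists N => n nN.
by rewrite absBC; apply: hN.
Qed.

Lemma ps_tail a z s n : bnd a -> abs z < 1 -> PS a z s ->
  abs (s - psum a z n) <= abs z ^+ n.
Proof.
move=> ha z1 hs; apply: le_of_max; first by rewrite exprn_ge0 ?abs_ge0.
move=> e e0; have [N hN] := hs e e0.
have h1 := hN (maxn N n) (leq_maxl _ _).
have h2 := psum_diff ha (ltW z1) (leq_maxr N n).
have -> : s - psum a z n = (s - psum a z (maxn N n)) + (psum a z (maxn N n) - psum a z n).
  by rewrite addrA subrK.
by apply: absDle; rewrite le_max ?(ltW h1) ?h2 ?orbT.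
Qed.

Lemma ps_uniq a z s t : PS a z s -> PS a z t -> s = t.
Proof.
move=> hs ht; apply/eqP; rewrite -subr_eq0; apply/eqP; apply: lim0 => e e0.
have [N1 h1] := hs e e0; have [N2 h2] := ht e e0.
have -> : s - t = (s - psum a z (maxn N1 N2)) - (t - psum a z (maxn N1 N2)).
  by rewrite opprB addrA subrK.
by apply: absBlt; [apply: h1; apply: leq_maxl|apply: h2; apply: leq_maxr].
Qed.

Lemma ps_evalE a z s : PS a z s -> EV a z = s.
Proof.
move=> hs; rewrite /ps_eval.
have := epsilon_spec (inhabits 0) (fun s => PS a z s) (ex_intro _ s hs).
by move=> h; apply: ps_uniq h hs.
Qed.

Lemma ps_evalP a z : bnd a -> abs z < 1 -> PS a z (EV a z).
Proof. by move=> ha z1; have [s hs] := ps_conv ha z1; rewrite (ps_evalE hs). Qed.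

Lemma ps_ext a b z s : (forall n, a n = b n) -> PS a z s -> PS b z s.
Proof. by move=> h; have -> : b = a by apply: functional_extensionality => n; rewrite h. Qed.

Lemma ps_add a b z s t : PS a z s -> PS b z t -> PS (fun n => a n + b n) z (s + t).
Proof.
move=> hs ht e e0; have [N1 h1] := hs e e0; have [N2 h2] := ht e e0.
exists (maxn N1 N2) => n nN.
have -> : s + t - psum (fun n => a n + b n) z n = (s - psum a z n) + (t - psum b z n).
  rewrite /psum (eq_bigr (fun i : 'I_n => a i * z ^+ i + b i * z ^+ i)); last by move=> i _; rewrite mulrDl.
  rewrite big_split /=; rewrite opprD !addrA; congr (_ + _); rewrite addrAC.
  done.
apply: absDlt; [apply: h1|apply: h2]; apply: leq_trans nN; [apply: leq_maxl|apply: leq_maxr].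
Qed.

Lemma ps_scale a z s c : PS a z s -> PS (fun n => c * a n) z (c * s).
Proof.
move=> hs e e0.
have psc : forall n, psum (fun n => c * a n) z n = c * psum a z n.
  by move=> n; rewrite /psum mulr_sumr; apply: eq_bigr => i _; rewrite mulrA.
have [->|cn] := eqVneq c 0.
    exists 0%N => n _; rewrite mul0r /psum big1 ?subrr ?abs0 // => i _.
  by rewrite !mul0r.
have ca := abs_neq0 cn.
have [N hN] := hs (e / abs c) (divr_gt0 e0 ca).
exists N => n nN; have := psc n; rewrite /psum => ->; rewrite -mulrBr absM.
by rewrite mulrC -ltr_pdivlMr //; apply: hN.
Qed.

Lemma ps_sub a b z s t : PS a z s -> PS b z t -> PS (fun n => a n - b n) z (s - t).
Proof.
move=> hs ht; have := ps_add hs (ps_scale (-1) ht).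
rewrite mulN1r; apply: ps_ext => n; by rewrite mulN1r.
Qed.

Lemma psum_stable a z N n : (forall n, (N <= n)%N -> a n = 0) -> (N <= n)%N -> psum a z n = psum a z N.
Proof.
move=> h; elim: n => [|n IH]; first by rewrite leqn0 => /eqP ->.
case: (ltngtP N n.+1) => // [Nn|<-] _; last done.
by rewrite psumS h ?mul0r ?addr0 ?IH // ltnW.
Qed.

Lemma ps_finite a z N : (forall n, (N <= n)%N -> a n = 0) -> PS a z (psum a z N).
Proof.
move=> h e e0; exists N => n nN; have := psum_stable z h nN; rewrite /psum => ->.
by rewrite subrr abs0.
Qed.

Lemma ps_bigsum J (A : nat -> ser) (v : nat -> K) z :
  (forall j, (j < J)%N -> PS (A j) z (v j)) ->
  PS (fun n => \sum_(j < J) A j n) z (\sum_(j < J) v j).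
Proof.
elim: J => [|J IH] h.
  have := @ps_finite (fun _ => 0) z 0 (fun _ _ => erefl).
  rewrite psum0 big_ord0; apply: ps_ext => n; by rewrite big_ord0.
rewrite big_ord_recr; have := ps_add (IH (fun j jJ => h j (ltnW jJ))) (h J (ltnSn _)).
by apply: ps_ext => n; rewrite big_ord_recr.
Qed.

Lemma bnd_sub a b : bnd a -> bnd b -> bnd (fun n => a n - b n).
Proof. by move=> ha hb n; apply: absBle. Qed.

Lemma absM_le1 x y : abs x <= 1 -> abs y <= 1 -> abs (x * y) <= 1.
Proof. by move=> h1 h2; rewrite absM mulr_ile1 ?abs_ge0. Qed.

Definition sh1 (a : ser) : ser := fun n => if n is n'.+1 then a n' else 0.
Definition shj j (a : ser) : ser := iter j sh1 a.

Lemma bnd_sh1 a : bnd a -> bnd (sh1 a).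
Proof. by move=> ha [|n] /=; rewrite ?abs0 ?ler01. Qed.
Lemma bnd_shj j a : bnd a -> bnd (shj j a).
Proof. by move=> ha; elim: j => [|j IH] //=; apply: bnd_sh1. Qed.

Lemma shj_val j a n : shj j a n = if (j <= n)%N then a (n - j)%N else 0.
Proof.
elim: j n => [|j IH] n; first by rewrite subn0.
rewrite /shj iterS -/(shj j a); case: n => [|n] //=.
Qed.

Lemma ps_sh1 a z s : abs z <= 1 -> PS a z s -> PS (sh1 a) z (z * s).
Proof.
move=> z1 hs e e0; have [N hN] := hs e e0.
exists N.+1 => [[|n]] // nN.
have -> : \sum_(i < n.+1) sh1 a i * z ^+ i = z * \sum_(i < n) a i * z ^+ i.
  rewrite big_ord_recl /= mul0r add0r mulr_sumr; apply: eq_bigr => i _.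
  by rewrite /bump /= add1n exprS mulrCA.
rewrite -mulrBr absM; apply: le_lt_trans (hN n nN).
by rewrite -[X in _ <= X]mul1r; apply: ler_wpM2r => //; apply: abs_ge0.
Qed.

Lemma ps_shj j a z s : abs z <= 1 -> PS a z s -> PS (shj j a) z (z ^+ j * s).
Proof.
move=> z1 hs; elim: j => [|j IH]; first by rewrite expr0 mul1r.
by rewrite exprS -mulrA; apply: ps_sh1.
Qed.

Lemma smul_shj a b n : smul a b n = \sum_(j < n.+1) b j * shj j a n.
Proof.
rewrite /smul -(big_mkord xpredT (fun i => a i * b (n - i)%N)).
rewrite big_rev_mkord subn0; apply: eq_bigr => i _.
rewrite shj_val -ltnS ltn_ord subSS mulrC subKn //; by rewrite -ltnS.
Qed.

Lemma sum_widen0 (F : nat -> K) m k : (m <= k)%N ->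
  (forall j, (m <= j)%N -> (j < k)%N -> F j = 0) ->
  \sum_(j < k) F j = \sum_(j < m) F j.
Proof.
move=> mk h; rewrite [RHS](big_ord_widen k F mk) [RHS]big_mkcond; apply: eq_bigr => i _.
case: ifP => // /negbT; rewrite -leqNgt => hi; by rewrite h.
Qed.

Lemma bnd_smul a b : bnd a -> bnd b -> bnd (smul a b).
Proof. by move=> ha hb n; apply: abs_sum_le => // i _; apply: absM_le1. Qed.

Lemma approx_core S T z s v k : bnd S -> bnd T -> abs z < 1 ->
  (forall n, (n < k)%N -> T n = S n) -> PS S z s -> PS T z v ->
  abs (s - v) <= abs z ^+ k.
Proof.
move=> hS hT z1 hk hs hv.
have := ps_tail k (bnd_sub hS hT) z1 (ps_sub hs hv).
rewrite /psum big1 ?subr0 // => i _; by rewrite hk // subrr mul0r.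
Qed.

Lemma approx S z L : bnd S -> abs z < 1 ->
  (forall e : R, 0 < e -> exists k T v, [/\ bnd T, (forall n, (n < k)%N -> T n = S n),
       PS T z v, abs (v - L) < e & abs z ^+ k < e]) ->
  PS S z L.
Proof.
move=> hS z1 h.
have hs := ps_evalP hS z1.
suff -> : L = EV S z by [].
apply/eqP; rewrite -subr_eq0; apply/eqP; apply: lim0 => e e0.
have [k [T [v [hT hk hv hvL hz]]]] := h e e0.
have hc := approx_core hS hT z1 hk hs hv.
have -> : L - EV S z = (L - v) - (EV S z - v) by rewrite opprB addrA subrK.
by apply: absBlt; [rewrite absBC|apply: le_lt_trans hc hz].
Qed.

Lemma abs_ev_le1 a z : bnd a -> abs z < 1 -> abs (EV a z) <= 1.
Proof. by move=> ha z1; have := ps_tail 0 ha z1 (ps_evalP ha z1); rewrite psum0 subr0 expr0. Qed.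

Lemma pz_abs z e : abs z < 1 -> 0 < e -> exists N, forall n, (N <= n)%N -> abs z ^+ n < e.
Proof. by move=> z1 e0; apply: pz => //; apply: abs_ge0. Qed.

Lemma ps_smul a b z : bnd a -> bnd b -> abs z < 1 ->
  PS (smul a b) z (EV a z * EV b z).
Proof.
move=> ha hb z1; apply: approx => //; first exact: bnd_smul.
move=> e e0.
have [N1 h1] := ps_evalP hb z1 e0.
have [N2 h2] := pz_abs z1 e0.
set k := maxn N1 N2.
exists k, (fun n => \sum_(j < k) b j * shj j a n),
  (\sum_(j < k) b j * (z ^+ j * EV a z)); split.
- by move=> n; apply: abs_sum_le => // i _; apply: absM_le1 => //; apply: bnd_shj.
- move=> n nk; rewrite smul_shj; apply: (@sum_widen0 (fun j => b j * shj j a n) n.+1) => // j nj _.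
  by rewrite shj_val leqNgt nj mulr0.
- apply: (@ps_bigsum k (fun j n => b j * shj j a n) (fun j => b j * (z ^+ j * EV a z))) => j _; apply: ps_scale; apply: ps_shj; first exact: ltW.
  exact: ps_evalP.
- have -> : \sum_(j < k) b j * (z ^+ j * EV a z) = EV a z * \sum_(j < k) b j * z ^+ j.
    by rewrite mulr_sumr; apply: eq_bigr => j _; rewrite mulrA mulrC.
  rewrite -(mulrBr (EV a z)) absM absBC; apply: le_lt_trans (h1 k (leq_maxl _ _)).
  by rewrite -[X in _ <= X]mul1r; apply: ler_wpM2r; [apply: abs_ge0|apply: abs_ev_le1].
- exact: h2 (leq_maxr _ _).
Qed.

Definition delta0 : ser := fun n => (n == 0)%:R.
Lemma bnd_delta0 : bnd delta0.
Proof. by case => [|n]; rewrite /delta0 /= ?abs1 ?abs0 ?ler01. Qed.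
Lemma ps_delta0 z : PS delta0 z 1.
Proof.
have h : forall n, (1 <= n)%N -> delta0 n = 0 by case.
by have := ps_finite z h; rewrite /psum big_ord1 expr0 mulr1.
Qed.

Lemma bnd_sX : bnd (sX K).
Proof. by case => [|[|n]]; rewrite /sX /= ?abs1 ?abs0 ?ler01. Qed.
Lemma ps_sX z : PS (sX K) z z.
Proof.
have h : forall n, (2 <= n)%N -> sX K n = 0 by case => [|[|n]].
have := ps_finite z h; rewrite /psum big_ord_recr big_ord1 /= /sX /=.
by rewrite mul0r add0r mul1r expr1.
Qed.

Lemma bnd_spow a k : bnd a -> bnd (spow a k).
Proof. by move=> ha; elim: k => [|k IH] /=; [apply: bnd_delta0|apply: bnd_smul]. Qed.

Lemma ps_spow a z k : bnd a -> abs z < 1 -> PS (spow a k) z (EV a z ^+ k).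
Proof.
move=> ha z1; elim: k => [|k IH]; first by rewrite expr0; apply: ps_delta0.
rewrite exprS -(ps_evalE IH) /=; apply: ps_smul => //; exact: bnd_spow.
Qed.

Lemma spow_low (a : ser) k n : a 0%N = 0 -> (n < k)%N -> spow a k n = 0.
Proof.
move=> a0; elim: k n => [|k IH] n //= nk.
rewrite /smul big1 // => i _.
case: (posnP i) => [->|ip]; first by rewrite a0 mul0r.
rewrite IH ?mulr0 //.
have := ltn_ord i; lia.
Qed.

Lemma bnd_scomp g h : bnd g -> bnd h -> bnd (scomp g h).
Proof. by move=> hg hh n; apply: abs_sum_le => // i _; apply: absM_le1 => //; apply: bnd_spow. Qed.

Lemma ev_le w z : bnd w -> w 0%N = 0 -> abs z < 1 -> abs (EV w z) <= abs z.
Proof.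
move=> hw w0 z1; have := ps_tail 1 hw z1 (ps_evalP hw z1).
by rewrite /psum big_ord1 w0 mul0r subr0 expr1.
Qed.

Lemma ps_scomp a w z : bnd a -> bnd w -> w 0%N = 0 -> abs z < 1 ->
  PS (scomp a w) z (EV a (EV w z)).
Proof.
move=> ha hw w0 z1.
set y := EV w z.
have y1 : abs y < 1 by apply: le_lt_trans (ev_le hw w0 z1) z1.
apply: approx => //; first exact: bnd_scomp.
move=> e e0.
have [N1 h1] := ps_evalP ha y1 e0.
have [N2 h2] := pz_abs z1 e0.
set k := maxn N1 N2.
exists k, (fun n => \sum_(j < k) a j * spow w j n), (\sum_(j < k) a j * y ^+ j); split.
- by move=> n; apply: abs_sum_le => // i _; apply: absM_le1 => //; apply: bnd_spow.
- move=> n nk; rewrite /scomp.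
  apply: (@sum_widen0 (fun j => a j * spow w j n) n.+1) => // j nj _.
  by rewrite spow_low ?mulr0.
- apply: (@ps_bigsum k (fun j n => a j * spow w j n) (fun j => a j * y ^+ j)) => j _.
  by apply: ps_scale; apply: ps_spow.
- by rewrite absBC; apply: h1; apply: leq_maxl.
- exact: h2 (leq_maxr _ _).
Qed.

Lemma scomp0 (g h : ser) : g 0%N = 0 -> scomp g h 0%N = 0.
Proof. by move=> g0; rewrite /scomp big_ord1 g0 mul0r. Qed.

Lemma scomp1 (g h : ser) : g 0%N = 0 -> h 0%N = 0 -> scomp g h 1%N = g 1%N * h 1%N.
Proof.
move=> g0 h0; rewrite /scomp big_ord_recr big_ord1 /= g0 mul0r add0r.
by rewrite /smul big_ord_recr big_ord1 /= h0 mul0r add0r /delta0 /= mulr1.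
Qed.

Lemma bnd_siter g m : bnd g -> bnd (siter g m).
Proof. by move=> hg; elim: m => [|m IH] /=; [apply: bnd_sX|apply: bnd_scomp]. Qed.

Lemma siter0 (g : ser) m : g 0%N = 0 -> siter g m 0%N = 0.
Proof. by move=> g0; case: m => [|m] //=; rewrite scomp0. Qed.

Lemma siter1 (g : ser) m : g 0%N = 0 -> siter g m 1%N = g 1%N ^+ m.
Proof.
move=> g0; elim: m => [|m IH] /=; first by rewrite expr0.
by rewrite scomp1 ?siter0 // IH exprS.
Qed.

Lemma ps_siter g m z : bnd g -> g 0%N = 0 -> abs z < 1 ->
  PS (siter g m) z (iter m (EV g) z).
Proof.
move=> hg g0 z1; elim: m => [|m IH] /=; first exact: ps_sX.
rewrite -(ps_evalE IH); apply: ps_scomp => //; [exact: bnd_siter|exact: siter0].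
Qed.

Lemma iter_disc g m z : bnd g -> g 0%N = 0 -> abs z < 1 -> abs (iter m (EV g) z) <= abs z.
Proof.
move=> hg g0 z1; elim: m => [|m IH]; first exact: lexx.
have h1 := le_lt_trans IH z1; rewrite iterS; exact: le_trans (ev_le hg g0 h1) IH.
Qed.

Lemma absM_lt1 x y : abs x < 1 -> abs y <= 1 -> abs (x * y) < 1.
Proof.
move=> h1 h2; rewrite absM; apply: le_lt_trans h1.
by rewrite -[X in _ <= X]mulr1; apply: ler_wpM2l => //; apply: abs_ge0.
Qed.

Lemma ident S T t : bnd S -> bnd T -> 0 < abs t -> abs t < 1 ->
  (forall z, abs z < 1 -> EV S z = EV T z) -> forall n, S n = T n.
Proof.
move=> hS hT t0 t1 hev n0; apply/eqP; rewrite -subr_eq0; apply/negPn/negP => hn.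
set D := fun n => S n - T n.
have hD : bnd D by apply: bnd_sub.
have psD : forall z, abs z < 1 -> PS D z 0.
  by move=> z z1; have := ps_sub (ps_evalP hS z1) (ps_evalP hT z1); rewrite hev // subrr.
have ex : exists n, D n != 0 by exists n0.
case: (ex_minnP ex) => k hk hmin.
have Dk := abs_neq0 hk.
have [j hj] := pz_abs t1 Dk.
set z := t ^+ j.+1.
have tn0 : t != 0 by apply/eqP => e; move: t0; rewrite e abs0 ltxx.
have z0 : 0 < abs z by apply: abs_neq0; rewrite expf_neq0.
have z1 : abs z < 1 by rewrite /z absX exprn_ilt1 ?abs_ge0.
have zD : abs z < abs (D k).
  apply: le_lt_trans (hj j (leqnn _)); rewrite /z absX; apply: powle => //; exact: ltW.
have := ps_tail k.+1 hD z1 (psD z z1).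
have -> : psum D z k.+1 = D k * z ^+ k.
  rewrite psumS /psum big1 ?add0r // => i _.
  have : ~~ (D i != 0) by apply/negP => hi; have := hmin _ hi; rewrite leqNgt ltn_ord.
  by rewrite negbK => /eqP ->; rewrite mul0r.
rewrite sub0r absN absM absX exprS mulrC.
have zk : 0 < abs z ^+ k by apply: exprn_gt0.
rewrite [_ * abs (D k)]mulrC ler_pM2r // => h.
by have := lt_le_trans zD h; rewrite ltxx.
Qed.

Definition Lx (x : K) : ser := fun n => match n with 0 => - x | 1 => 1 | _ => 0 end.

Lemma bnd_L x : abs x <= 1 -> bnd (Lx x).
Proof. by move=> x1 [|[|n]] /=; rewrite ?absN ?abs1 ?abs0 ?ler01. Qed.

Lemma ps_L x z : PS (Lx x) z (z - x).
Proof.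
have h : forall n, (2 <= n)%N -> Lx x n = 0 by case => [|[|n]].
have := ps_finite z h; rewrite /psum big_ord_recr big_ord1 /=.
by rewrite expr0 mulr1 mul1r expr1 addrC.
Qed.

Lemma smulL0 x b : smul (Lx x) b 0%N = - x * b 0%N.
Proof. by rewrite /smul big_ord1. Qed.
Lemma smulLS x b n : smul (Lx x) b n.+1 = - x * b n.+1 + b n.
Proof.
rewrite /smul big_ord_recl big_ord_recl big1 ?addr0 /=; last by move=> i _; rewrite mul0r.
by rewrite subn0 /bump /= subSS subn0 mul1r.
Qed.

Lemma factor a x : bnd a -> 0 < abs x -> abs x < 1 -> PS a x 0 ->
  exists g, bnd g /\ a = smul (Lx x) g.
Proof.
move=> ha x0 x1 hx.
have xn0 : x != 0 by apply/eqP => e; move: x0; rewrite e abs0 ltxx.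
exists (fun k => - psum a x k.+1 / x ^+ k.+1); split.
  move=> k; rewrite absM absN absV absX.
  have hk := ps_tail k.+1 ha x1 hx; rewrite sub0r absN in hk.
  have xk : 0 < abs x ^+ k.+1 by apply: exprn_gt0.
  by rewrite ler_pdivrMr // mul1r.
apply: functional_extensionality => [[|n]].
  rewrite smulL0 /psum big_ord1 expr0 mulr1 expr1.
  by field.
rewrite smulLS psumS.
set P := psum a x n.+1.
have -> : x ^+ n.+2 = x * x ^+ n.+1 by rewrite exprS.
have y0 : x ^+ n.+1 != 0 by rewrite expf_neq0.
set y := x ^+ n.+1.
by field; rewrite y0 xn0.
Qed.

Definition Q (s : seq K) (g : ser) : ser := foldr (fun x acc => smul (Lx x) acc) g s.

Lemma Q0 s g : Q s g 0%N = \prod_(x <- s) (- x) * g 0%N.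
Proof.
elim: s => [|x s IH] /=; first by rewrite big_nil mul1r.
by rewrite smulL0 IH big_cons mulrA.
Qed.

Lemma bnd_Q s g : (forall x, x \in s -> abs x <= 1) -> bnd g -> bnd (Q s g).
Proof.
elim: s => [|x s IH] hs hg //=.
apply: bnd_smul; first by apply: bnd_L; apply: hs; rewrite inE eqxx.
by apply: IH => // y ys; apply: hs; rewrite inE ys orbT.
Qed.

Lemma ps_Q s g z : (forall x, x \in s -> abs x <= 1) -> bnd g -> abs z < 1 ->
  PS (Q s g) z (\prod_(x <- s) (z - x) * EV g z).
Proof.
elim: s => [|x s IH] hs hg z1 /=; first by rewrite big_nil mul1r; apply: ps_evalP.
have hs' : forall y, y \in s -> abs y <= 1 by move=> y ys; apply: hs; rewrite inE ys orbT.
have hx : abs x <= 1 by apply: hs; rewrite inE eqxx.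
have := ps_smul (bnd_L hx) (bnd_Q hs' hg) z1.
by rewrite (ps_evalE (ps_L x z)) (ps_evalE (IH hs' hg z1)) big_cons mulrA.
Qed.

Lemma Q_low s g : (forall x, x \in s -> abs x < 1) -> bnd g ->
  (forall k, (k < size s)%N -> abs (Q s g k) < 1) /\ abs (Q s g (size s) - g 0%N) < 1.
Proof.
elim: s => [|x s IH] hs hg /=; first by split => // ; rewrite subrr abs0 ltr01.
have hs' : forall y, y \in s -> abs y < 1 by move=> y ys; apply: hs; rewrite inE ys orbT.
have hx : abs x < 1 by apply: hs; rewrite inE eqxx.
have hxN : abs (- x) < 1 by rewrite absN.
have [IH1 IH2] := IH hs' hg.
have hb := bnd_Q (fun y ys => ltW (hs' y ys)) hg.
split.
  case => [|k] hk; first by rewrite smulL0; apply: absM_lt1.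
  by rewrite smulLS; apply: absDlt; [apply: absM_lt1|apply: IH1].
by rewrite smulLS -addrA; apply: absDlt => //; apply: absM_lt1.
Qed.

Lemma factor_all h s : bnd h -> uniq s ->
  (forall x, x \in s -> [/\ 0 < abs x, abs x < 1 & PS h x 0]) ->
  exists g, bnd g /\ h = Q s g.
Proof.
elim: s h => [|x s IH] h hh us hs; first by exists h.
have [x0 x1 hx] := hs x (mem_head _ _).
have [h1 [hb1 e1]] := factor hh x0 x1 hx.
case/andP: us => xs us.
have hs' : forall y, y \in s -> [/\ 0 < abs y, abs y < 1 & PS h1 y 0].
  move=> y ys; have [y0 y1 hy] := hs y ((mem_behead (s := x :: s) ys)).
  split => //.
  have h2 := ps_smul (bnd_L (ltW x1)) hb1 y1.
  rewrite -e1 (ps_evalE (ps_L x y)) in h2.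
  have := ps_uniq hy h2 => /esym /eqP; rewrite mulf_eq0 => /orP[|/eqP e].
    by rewrite subr_eq0 => /eqP e; move: xs; rewrite -e ys.
  by rewrite -e; apply: ps_evalP.
have [g [hg e2]] := IH h1 hb1 us hs'.
by exists g; split => //; rewrite e1 e2.
Qed.

Lemma abs_prodN s r : (forall x, x \in s -> abs x = r) ->
  abs (\prod_(x <- s) (- x)) = r ^+ size s.
Proof.
elim: s => [|x s IH] hs; first by rewrite big_nil abs1 expr0.
rewrite big_cons absM absN hs ?mem_head // IH ?exprS //.
by move=> y ys; apply: hs; rewrite inE ys orbT.
Qed.

Lemma core h s r : bnd h -> uniq s -> 0 < r -> r < 1 ->
  (forall x, x \in s -> abs x = r /\ PS h x 0) ->
  exists g, [/\ bnd g, abs (h 0%N) = r ^+ size s * abs (g 0%N),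
     (wideg_eq abs h (size s) <-> ~ (abs (g 0%N) < 1)) &
     (forall z, abs z < 1 -> z != 0 -> PS h z 0 -> z \notin s -> abs (g 0%N) < 1)].
Proof.
move=> hh us r0 r1 hs.
have hs' : forall x, x \in s -> [/\ 0 < abs x, abs x < 1 & PS h x 0].
  by move=> x xs; have [e hx] := hs x xs; rewrite e.
have [g [hg e]] := factor_all hh us hs'.
have s1 : forall x, x \in s -> abs x < 1 by move=> x xs; have [_ ? _] := hs' x xs.
exists g; split => //.
- rewrite e Q0 absM (@abs_prodN s r) //.
  by move=> x xs; have [] := hs x xs.
- have [L1 L2] := Q_low s1 hg; rewrite -e in L1 L2.
  split.
    case=> hN _ hg0; apply: hN.
    have -> : h (size s) = (h (size s) - g 0%N) + g 0%N by rewrite subrK.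
    exact: absDlt.
  move=> hg0; split => // hN; apply: hg0.
  have -> : g 0%N = h (size s) - (h (size s) - g 0%N) by rewrite opprB addrC subrK.
  exact: absBlt.
- move=> z z1 zn0 hz zs.
  have hs1 : forall x, x \in s -> abs x <= 1 by move=> x xs; apply: ltW; apply: s1.
  have := ps_Q hs1 hg z1; rewrite -e => h2.
  have := ps_uniq hz h2 => /esym /eqP; rewrite mulf_eq0 => /orP[|/eqP eg].
    rewrite prodf_seq_eq0 => /hasP [x xs /=]; rewrite subr_eq0 => /eqP ezx.
    by move: zs; rewrite ezx xs.
  have hgz : PS g z 0 by rewrite -eg; apply: ps_evalP.
  have [g' [hg' eg']] := factor hg (abs_neq0 zn0) z1 hgz.
  by rewrite eg' smulL0; apply: absM_lt1; [rewrite absN|apply: hg'].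
Qed.

Fixpoint Eser (w : ser) k : ser :=
  if k is k'.+1 then fun n => smul w (Eser w k') n + shj k' delta0 n else fun _ => 0.

Lemma bnd_E w k : bnd w -> bnd (Eser w k).
Proof.
move=> hw; elim: k => [|k IH] /=; first by move=> n; rewrite abs0 ler01.
move=> n; apply: absDle; first exact: bnd_smul.
by apply: bnd_shj; apply: bnd_delta0.
Qed.

Lemma ps_E w k z : bnd w -> abs z < 1 ->
  (EV w z - z) * EV (Eser w k) z = EV w z ^+ k - z ^+ k.
Proof.
move=> hw z1; elim: k => [|k IH].
  have h0 := @ps_finite (fun _ => 0) z 0 (fun _ _ => erefl); rewrite psum0 in h0.
  by rewrite /= (ps_evalE h0) mulr0 !expr0 subrr.
have h := ps_add (ps_smul hw (bnd_E k hw) z1) (ps_shj k (ltW z1) (ps_delta0 z)).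
rewrite /= (ps_evalE h) mulr1 mulrDr mulrA [(_ - z) * EV w z]mulrC -mulrA IH.
by rewrite !exprS; ring.
Qed.

Lemma E_low (w : ser) k n : w 0%N = 0 -> (n.+1 < k)%N -> Eser w k n = 0.
Proof.
move=> w0; elim: k n => [|k IH] n //= nk.
rewrite shj_val.
have -> : (k <= n)%N = false by apply/negbTE; rewrite -ltnNge; lia.
rewrite addr0 /smul big1 // => i _.
case: (posnP i) => [->|ip]; first by rewrite w0 mul0r.
rewrite IH ?mulr0 //; have := ltn_ord i; lia.
Qed.

Lemma diff_lemma a w : bnd a -> bnd w -> w 0%N = 0 ->
  exists D, bnd D /\ forall z, abs z < 1 ->
    EV (scomp a w) z - EV a z = (EV w z - z) * EV D z.
Proof.
move=> ha hw w0.
set D := fun n => \sum_(j < n.+2) a j * Eser w j n.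
have hD : bnd D by move=> n; apply: abs_sum_le => // i _; apply: absM_le1 => //; apply: bnd_E.
exists D; split => // z z1.
set y := EV w z.
have y1 : abs y < 1 by apply: le_lt_trans (ev_le hw w0 z1) z1.
rewrite (ps_evalE (ps_scomp ha hw w0 z1)) -/y.
apply/eqP; rewrite -subr_eq0; apply/eqP; apply: lim0 => e e0.
have [N1 h1] := ps_evalP ha y1 e0.
have [N2 h2] := ps_evalP ha z1 e0.
have [N3 h3] := pz_abs z1 e0.
set k := maxn N1 (maxn N2 N3).
set T := fun n => \sum_(j < k.+1) a j * Eser w j n.
have hT : bnd T by move=> n; apply: abs_sum_le => // i _; apply: absM_le1 => //; apply: bnd_E.
have psT : PS T z (\sum_(j < k.+1) a j * EV (Eser w j) z).
  apply: (@ps_bigsum k.+1 (fun j n => a j * Eser w j n) (fun j => a j * EV (Eser w j) z)) => j _.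
  by apply: ps_scale; apply: ps_evalP => //; apply: bnd_E.
have agree : forall n, (n < k)%N -> T n = D n.
  move=> n nk; rewrite /T /D.
  apply: (@sum_widen0 (fun j => a j * Eser w j n) n.+2) => // j nj _.
  by rewrite E_low ?mulr0.
have hc := approx_core hD hT z1 agree (ps_evalP hD z1) psT.
set v := \sum_(j < k.+1) a j * EV (Eser w j) z in psT hc.
have ev : (y - z) * v = psum a y k.+1 - psum a z k.+1.
  rewrite /v mulr_sumr /psum -sumrB; apply: eq_bigr => j _.
  by rewrite mulrCA ps_E // mulrBr.
have -> : EV a y - EV a z - (y - z) * EV D z =
   (EV a y - psum a y k.+1) - (EV a z - psum a z k.+1) - (y - z) * (EV D z - v).
  by rewrite mulrBr ev; ring.
have kN1 : (N1 <= k.+1)%N by apply: leqW; apply: leq_maxl.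
have kN2 : (N2 <= k.+1)%N by apply: leqW; rewrite /k leq_max leq_maxl orbT.
have kN3 : (N3 <= k)%N by rewrite /k leq_max leq_maxr !orbT.
apply: absBlt; first by apply: absBlt; [apply: h1|apply: h2].
rewrite absM; apply: le_lt_trans (h3 k kN3).
apply: le_trans hc; rewrite -[X in _ <= X]mul1r; apply: ler_wpM2r; first exact: abs_ge0.
by apply: absBle; apply: ltW.
Qed.

Lemma divis g t : bnd g -> g 0%N = 0 -> 0 < abs t -> abs t < 1 -> forall k,
  exists h, bnd h /\
    (fun n => siter g k n - sX K n) = smul h (fun n => g n - sX K n).
Proof.
move=> hg g0 t0 t1.
set u := fun n => g n - sX K n.
have hu : bnd u by apply: bnd_sub => //; apply: bnd_sX.
have psu : forall z, abs z < 1 -> PS u z (EV g z - z).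
  by move=> z z1; apply: ps_sub; [apply: ps_evalP|apply: ps_sX].
elim=> [|k [h [hh eh]]].
  exists (fun _ => 0); split; first by move=> n; rewrite abs0 ler01.
  apply: functional_extensionality => n /=; rewrite subrr /smul big1 // => i _.
  by rewrite mul0r.
set w := siter g k.
have hw : bnd w by apply: bnd_siter.
have w0 : w 0%N = 0 by apply: siter0.
have [D [hD eD]] := diff_lemma hg hw w0.
set h' := fun n => delta0 n + smul h D n.
have hh' : bnd h' by move=> n; apply: absDle; [apply: bnd_delta0|apply: bnd_smul].
exists h'; split => //.
apply: functional_extensionality; apply: (@ident _ _ t) => //.
- by apply: bnd_sub; [apply: bnd_siter|apply: bnd_sX].
- exact: bnd_smul.
move=> z z1.
have IHev : EV w z - z = EV h z * (EV g z - z).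
  have p1 : PS (fun n => w n - sX K n) z (EV w z - z) by apply: ps_sub; [apply: ps_evalP|apply: ps_sX].
  rewrite /w eh in p1.
  have p2 := ps_smul hh hu z1; rewrite (ps_evalE (psu z z1)) in p2.
  exact: ps_uniq p1 p2.
rewrite (ps_evalE (ps_sub (ps_evalP (bnd_siter k.+1 hg) z1) (ps_sX z))).
have p3 := ps_smul hh' hu z1.
rewrite (ps_evalE p3) (ps_evalE (psu z z1)).
have p4 := ps_add (ps_delta0 z) (ps_smul hh hD z1).
rewrite (ps_evalE p4).
have e1 := eD z z1.
rewrite /= -/w -[EV (scomp g w) z](subrK (EV g z)) e1 IHev.
ring.
Qed.

Lemma pw_aux (A r G c : R) (N : nat) : (0 < N)%N -> 0 < r -> 0 <= G -> G <= 1 ->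
  A = r ^+ N * G -> 0 <= c -> c ^+ N = A -> c <= r /\ (r = c <-> G = 1).
Proof.
move=> N0 r0 G0 G1 eA c0 cN.
have rN0 : 0 < r ^+ N by apply: exprn_gt0.
split.
  have mono := @ler_pXn2r R N N0 c r.
  have hc : c \is Num.nneg by rewrite nnegrE.
  have hr : r \is Num.nneg by rewrite nnegrE ltW.
  rewrite -(mono hc hr) cN eA.
  by rewrite -[X in _ <= X]mulr1; apply: ler_wpM2l => //; apply: ltW.
split.
  move=> erc; have : r ^+ N = A by rewrite erc cN.
  rewrite eA -[X in X = _]mulr1 => /mulfI -> //; by rewrite lt0r_neq0.
move=> eG; apply/eqP; rewrite -(eqrXn2 N0); [|exact: ltW|done].
by rewrite cN eA eG mulr1.
Qed.

Lemma powR_core (A r G : R) (N : nat) : (0 < N)%N -> 0 < r -> 0 <= G -> G <= 1 ->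
  A = r ^+ N * G -> A `^ (N%:R^-1) <= r /\ (r = A `^ (N%:R^-1) <-> G = 1).
Proof.
move=> N0 r0 G0 G1 eA.
have A0 : 0 <= A by rewrite eA mulr_ge0 // exprn_ge0 // ltW.
apply: pw_aux eA _ _ => //; first exact: powR_ge0.
rewrite -powR_mulrn ?powR_ge0 // -powRrM mulVf ?powRr1 //.
by rewrite pnatr_eq0 -lt0n.
Qed.

Lemma iterC (F : K -> K) a b x : iter a F (iter b F x) = iter b F (iter a F x).
Proof. by rewrite -!iterD addnC. Qed.

Lemma cycle_uniq (F : K -> K) z N : min_period F z N ->
  uniq [seq iter i F z | i <- iota 0 N].
Proof.
case=> N0 [hN hmin]; rewrite map_inj_in_uniq ?iota_uniq //.
have key : forall i j, (i < j)%N -> (j < N)%N -> iter i F z <> iter j F z.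
  move=> i j ij jN e.
  have : iter (N - j) F (iter j F z) = iter (N - j + i) F z.
    by rewrite -e iterD.
  rewrite -iterD subnK ?(ltnW jN) // hN => /esym; apply: hmin.
  apply/andP; split; lia.
move=> i j; rewrite !mem_iota !add0n /= => iN jN e.
case: (ltngtP i j) => // ij.
  by have := key _ _ ij jN e.
by have := key _ _ ij iN (esym e).
Qed.

Lemma cycle_nonper (F : K -> K) z N M i : min_period F z N -> (0 < M < N)%N -> (i < N)%N ->
  iter M F (iter i F z) <> iter i F z.
Proof.
case=> N0 [hN hmin] hM iN e.
have : iter (N - i) F (iter M F (iter i F z)) = iter (N - i) F (iter i F z) by rewrite e.
have e1 : iter (N - i) F (iter i F z) = z by rewrite -iterD subnK ?hN // ltnW.
have e2 : iter (N - i) F (iter M F (iter i F z)) = iter M F z by rewrite iterC e1.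
by rewrite e2 e1; apply: hmin.
Qed.

Lemma cycle_per (F : K -> K) z N i : iter N F z = z -> iter N F (iter i F z) = iter i F z.
Proof. by move=> hN; rewrite iterC hN. Qed.

Lemma F0 (f : ser) : bnd f -> f 0%N = 0 -> EV f 0 = 0.
Proof.
move=> hf f0; have z1 : abs (0 : K) < 1 by rewrite abs0 ltr01.
have := ev_le hf f0 z1; rewrite abs0 => h.
by apply: abs_eq0; apply/eqP; rewrite eq_le h abs_ge0.
Qed.

Lemma absF (f : ser) lam x : bnd f -> f 0%N = 0 -> f 1%N = lam -> abs lam = 1 ->
  abs x < 1 -> abs (EV f x) = abs x.
Proof.
move=> hf f0 f1 hl x1.
have [->|xn0] := eqVneq x 0; first by rewrite F0.
have x0 := abs_neq0 xn0.
have ht := ps_tail 2 hf x1 (ps_evalP hf x1).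
have e2 : psum f x 2 = lam * x.
  by rewrite /psum big_ord_recr big_ord1 /= f0 f1 mul0r add0r expr1.
rewrite e2 in ht.
have hlx : abs (lam * x) = abs x by rewrite absM hl mul1r.
rewrite -hlx; apply: abs_strict; rewrite hlx; apply: le_lt_trans ht _.
by rewrite expr2 -[X in _ < X]mulr1 ltr_pM2l.
Qed.

Lemma absF_iter (f : ser) lam x k : bnd f -> f 0%N = 0 -> f 1%N = lam -> abs lam = 1 ->
  abs x < 1 -> abs (iter k (EV f) x) = abs x.
Proof.
move=> hf f0 f1 hl x1; elim: k => [|k IH] //=.
by rewrite (absF hf f0 f1 hl) // IH.
Qed.

Lemma nonzero_of_period (f : ser) w N : bnd f -> f 0%N = 0 -> (1 < N)%N ->
  min_period (EV f) w N -> w != 0.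
Proof.
move=> hf f0 N1 [_ [_ hmin]]; apply/eqP => e.
by apply: (hmin 1%N); [rewrite N1|rewrite e /= F0].
Qed.

Lemma root_shift (G h : ser) x : bnd h -> x != 0 -> abs x < 1 ->
  (forall n, G n = sh1 h n) -> PS G x 0 -> PS h x 0.
Proof.
move=> hh xn0 x1 eG hG.
have p1 := ps_sh1 (ltW x1) (ps_evalP hh x1).
have p2 : PS G x (x * EV h x) by apply: ps_ext p1 => n; rewrite eG.
have := ps_uniq hG p2 => /esym /eqP; rewrite mulf_eq0 (negbTE xn0) /= => /eqP e.
by rewrite -e; apply: ps_evalP.
Qed.

Lemma not_lt1 x : abs x <= 1 -> (abs x = 1 <-> ~ (abs x < 1)).
Proof.
move=> x1; split; first by move=> ->; rewrite ltxx.
by move=> h; apply/eqP; rewrite eq_le x1 leNgt; apply/negP.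
Qed.

Lemma wideg_shift (G h : ser) N : abs (G 0%N) < 1 -> (forall n, G n.+1 = h n) ->
  (wideg_eq abs G N.+1 <-> wideg_eq abs h N).
Proof.
move=> G0 eG; rewrite /wideg_eq eG; split; case=> h1 h2; split => //.
  by move=> k kN; rewrite -eG; apply: h2.
by case=> [|k] // kN; rewrite eG; apply: h2.
Qed.

Lemma cycle_mem (F : K -> K) z N x : x \in [seq iter i F z | i <- iota 0 N] ->
  exists2 i, (i < N)%N & x = iter i F z.
Proof. by case/mapP => i; rewrite mem_iota add0n => /andP[_ iN] ->; exists i. Qed.

Lemma part1 (lam : K) (q : nat) (f : ser) : abs lam = 1 -> (0 < q)%N -> bnd f ->
  f 0%N = 0 -> f 1%N = lam ->
  let F := EV f in
  (lam ^+ q != 1 ->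
   forall w0, abs w0 < 1 -> min_period F w0 q -> (q = 1%N -> w0 != 0) ->
   let c := abs (lam ^+ q - 1) `^ (q%:R^-1) in
   [/\ c <= abs w0,
       (abs w0 = c <-> wideg_eq abs (fun k => siter f q k - sX K k) q.+1) &
       (abs w0 = c ->
          (forall w, abs w < 1 -> w != 0 -> min_period F w q ->
             exists k, w = iter k F w0) /\
          (forall k, abs (iter k F w0) = c))]).
Proof.
move=> hl q0 hf f0 f1 F lq w0 w1 hper hq1 c.
have w0n : w0 != 0.
  case: (ltngtP q 1) => [q1|q1|q1]; first by rewrite ltnS leqn0 in q1; rewrite (eqP q1) in q0.
    exact: nonzero_of_period hf f0 q1 hper.
  exact: hq1.
set G := fun k => siter f q k - sX K k.
set h := fun k => G k.+1.
have hG : bnd G by apply: bnd_sub; [apply: bnd_siter|apply: bnd_sX].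
have hh : bnd h by move=> n; apply: hG.
have eG : forall n, G n = sh1 h n.
  by case=> [|n] //=; rewrite /G siter0 // /sX /= subr0.
have h0 : h 0%N = lam ^+ q - 1 by rewrite /h /G siter1 // f1.
set s := [seq iter i F w0 | i <- iota 0 q].
have us : uniq s := cycle_uniq hper.
have ss : size s = q by rewrite size_map size_iota.
set r := abs w0.
have r0 : 0 < r := abs_neq0 w0n.
have rootG : forall x, abs x < 1 -> x != 0 -> iter q F x = x -> PS h x 0.
  move=> x x1 xn hx.
  have p := ps_sub (ps_siter q hf f0 x1) (ps_sX x); rewrite -/F hx subrr in p.
  exact: root_shift hh xn x1 eG p.
have hs : forall x, x \in s -> abs x = r /\ PS h x 0.
  move=> x /cycle_mem [i _ ->].
  have ax : abs (iter i F w0) = r by rewrite /F (absF_iter _ hf f0 f1 hl w1).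
  split => //; apply: rootG.
  - by rewrite ax.
  - by apply/eqP => e; move: r0; rewrite -ax e abs0 ltxx.
  - by apply: cycle_per; case: hper => _ [].
have [g [hg eA hw huniq]] := core hh us r0 w1 hs.
rewrite ss h0 in eA hw.
have [P1 P2] := powR_core q0 r0 (abs_ge0 (g 0%N)) (hg 0%N) eA.
rewrite -/c in P1 P2.
have eqc : abs w0 = c <-> ~ (abs (g 0%N) < 1).
  by rewrite -(not_lt1 (hg 0%N)); exact: P2.
split => //.
- rewrite eqc (wideg_shift (h := h)) //; first by split => /hw.
  by rewrite eG /= abs0 ltr01.
- move=> /eqc g1; split.
    move=> w wi wn [_ [hwq _]].
    case: (boolP (w \in s)) => [/cycle_mem [i _ ->]|ws]; first by exists i.
    by exfalso; apply: g1; apply: (huniq w) => //; apply: rootG.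
  move=> k; rewrite /F (absF_iter _ hf f0 f1 hl w1).
  by move/eqc: g1.
Qed.

Lemma iter_comp (f : ser) M k z : bnd f -> f 0%N = 0 -> abs z < 1 ->
  iter k (EV (siter f M)) z = iter (M * k) (EV f) z.
Proof.
move=> hf f0 z1; elim: k => [|k IH]; first by rewrite muln0.
have y1 : abs (iter (M * k) (EV f) z) < 1 by apply: le_lt_trans (iter_disc _ hf f0 z1) z1.
rewrite iterS IH (ps_evalE (ps_siter M hf f0 y1)) mulnS iterD //.
Qed.

Lemma siter_mul (f : ser) M k t : bnd f -> f 0%N = 0 -> 0 < abs t -> abs t < 1 ->
  siter (siter f M) k = siter f (M * k).
Proof.
move=> hf f0 t0 t1; apply: functional_extensionality; apply: (@ident _ _ t) => //.
- by apply: bnd_siter; apply: bnd_siter.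
- exact: bnd_siter.
move=> z z1.
rewrite (ps_evalE (ps_siter k (bnd_siter M hf) (siter0 M f0) z1)).
by rewrite (ps_evalE (ps_siter (M * k) hf f0 z1)) iter_comp.
Qed.

Lemma part2 (lam : K) (q : nat) (f : ser) (p : nat) : prime p -> abs lam = 1 -> (0 < q)%N -> bnd f ->
  f 0%N = 0 -> f 1%N = lam ->
  let F := EV f in
  (forall n : nat, (1 <= n)%N -> lam ^+ (q * p ^ n) != 1 ->
   forall z0, abs z0 < 1 -> min_period F z0 (q * p ^ n) ->
   let c := abs ((lam ^+ (q * p ^ n) - 1) / (lam ^+ (q * p ^ n.-1) - 1))
              `^ ((q * p ^ n)%:R^-1) in
   [/\ c <= abs z0,
       (forall h : series K, integral abs h ->
          (fun k => siter f (q * p ^ n) k - sX K k) =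
            smul h (fun k => siter f (q * p ^ n.-1) k - sX K k) ->
          (abs z0 = c <-> wideg_eq abs h (q * p ^ n))) &
       (abs z0 = c ->
          (forall z, abs z < 1 -> min_period F z (q * p ^ n) ->
             exists k, z = iter k F z0) /\
          (forall k, abs (iter k F z0) = c))]).
Proof.
move=> pr hl q0 hf f0 f1 F n n1 lN z0 z1 hper c.
have p1 : (1 < p)%N := prime_gt1 pr.
have eN : (q * p ^ n = (q * p ^ n.-1) * p)%N.
  by rewrite -mulnA -expnSr prednK.
have M0 : (0 < q * p ^ n.-1)%N by rewrite muln_gt0 q0 expn_gt0 ltnW.
have MN : (q * p ^ n.-1 < q * p ^ n)%N by rewrite eN ltn_Pmulr.
have N1 : (1 < q * p ^ n)%N by lia.
have NN0 : (0 < q * p ^ n)%N by lia.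
have lM : lam ^+ (q * p ^ n.-1) != 1.
  by apply/eqP => e; move/eqP: lN; apply; rewrite eN exprM e expr1n.
have z0n : z0 != 0 := nonzero_of_period hf f0 N1 hper.
set N := (q * p ^ n)%N in eN MN N1 NN0 lN hper c *.
set M := (q * p ^ n.-1)%N in eN M0 MN lM c *.
set G1 := fun k => siter f M k - sX K k.
set G2 := fun k => siter f N k - sX K k.
have hG1 : bnd G1 by apply: bnd_sub; [apply: bnd_siter|apply: bnd_sX].
set s := [seq iter i F z0 | i <- iota 0 N].
have us : uniq s := cycle_uniq hper.
have ss : size s = N by rewrite size_map size_iota.
set r := abs z0.
have r0 : 0 < r := abs_neq0 z0n.
have KC : forall h, bnd h -> G2 = smul h G1 ->
    [/\ c <= r, (r = c <-> wideg_eq abs h N) &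
       (r = c -> forall z, abs z < 1 -> min_period F z N -> exists k, z = iter k F z0)].
  move=> h hh eh.
  have h0 : h 0%N = (lam ^+ N - 1) / (lam ^+ M - 1).
    have e1 : G2 1%N = smul h G1 1%N by rewrite eh.
    rewrite /smul big_ord_recr big_ord1 /= /G1 /G2 !siter1 // !siter0 // f1 in e1.
    rewrite /sX /= subrr mulr0 addr0 in e1.
    rewrite e1 mulfK //; by rewrite subr_eq0.
  have root : forall z, abs z < 1 -> iter N F z = z -> iter M F z != z -> PS h z 0.
    move=> z zi hN hM.
    have p2 := ps_sub (ps_siter N hf f0 zi) (ps_sX z); rewrite -/F hN subrr -/G2 in p2.
    have p3 := ps_smul hh hG1 zi; rewrite -eh in p3.
    have p4 := ps_sub (ps_siter M hf f0 zi) (ps_sX z); rewrite -/F -/G1 in p4.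
    rewrite (ps_evalE p4) in p3.
    have := ps_uniq p2 p3 => /esym /eqP; rewrite mulf_eq0 subr_eq0 (negbTE hM) orbF => /eqP e.
    by rewrite -e; apply: ps_evalP.
  have hs : forall x, x \in s -> abs x = r /\ PS h x 0.
    move=> x /cycle_mem [i iN ->].
    have ax : abs (iter i F z0) = r by rewrite /F (absF_iter _ hf f0 f1 hl z1).
    split => //; apply: root.
    - by rewrite ax.
    - by apply: cycle_per; case: hper => _ [].
    - by apply/eqP; apply: cycle_nonper hper _ iN; rewrite M0 MN.
  have [g [hg eA hw huniq]] := core hh us r0 z1 hs.
  rewrite ss h0 in eA hw.
  have [P1 P2] := powR_core NN0 r0 (abs_ge0 (g 0%N)) (hg 0%N) eA.
  rewrite -/c in P1 P2.
  have eqc : r = c <-> ~ (abs (g 0%N) < 1).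
    by rewrite -(not_lt1 (hg 0%N)); exact: P2.
  split => //.
    by rewrite eqc; split => /hw.
  move=> /eqc g1 z zi [_ [hzN hmin]].
  have zn : z != 0 by apply: nonzero_of_period hf f0 N1 _; split.
  case: (boolP (z \in s)) => [/cycle_mem [i _ ->]|zs]; first by exists i.
  exfalso; apply: g1; apply: (huniq z) => //; apply: root => //.
  by apply/eqP; apply: hmin; rewrite M0 MN.
have [h [hh eh]] := divis (bnd_siter M hf) (siter0 M f0) r0 z1 p.
rewrite (siter_mul M p hf f0 r0 z1) -eN -/G1 -/G2 in eh.
have [K1 K2 K3] := KC h hh eh.
split => //.
  by move=> h' hh' eh'; have [_ E _] := KC h' hh' eh'; exact: E.
move=> rc; split; first exact: K3.
move=> k; rewrite /F (absF_iter _ hf f0 f1 hl z1); exact: rc.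
Qed.

Lemma main_in (p : nat) (hp : prime p)
  (lam : K) (hlam : abs lam = 1)
  (q : nat) (hq0 : (0 < q)%N)
  (f : series K) (hfint : integral abs f) (hf0 : f 0%N = 0) (hf1 : f 1%N = lam) :
  let F := ps_eval abs f in
  (lam ^+ q != 1 ->
   forall w0, abs w0 < 1 -> min_period F w0 q -> (q = 1%N -> w0 != 0) ->
   let c := abs (lam ^+ q - 1) `^ (q%:R^-1) in
   [/\ c <= abs w0,
       (abs w0 = c <-> wideg_eq abs (fun k => siter f q k - sX K k) q.+1) &
       (abs w0 = c ->
          (forall w, abs w < 1 -> w != 0 -> min_period F w q ->
             exists k, w = iter k F w0) /\
          (forall k, abs (iter k F w0) = c))]) /\
  (forall n : nat, (1 <= n)%N -> lam ^+ (q * p ^ n) != 1 ->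
   forall z0, abs z0 < 1 -> min_period F z0 (q * p ^ n) ->
   let c := abs ((lam ^+ (q * p ^ n) - 1) / (lam ^+ (q * p ^ n.-1) - 1))
              `^ ((q * p ^ n)%:R^-1) in
   [/\ c <= abs z0,
       (forall h : series K, integral abs h ->
          (fun k => siter f (q * p ^ n) k - sX K k) =
            smul h (fun k => siter f (q * p ^ n.-1) k - sX K k) ->
          (abs z0 = c <-> wideg_eq abs h (q * p ^ n))) &
       (abs z0 = c ->
          (forall z, abs z < 1 -> min_period F z (q * p ^ n) ->
             exists k, z = iter k F z0) /\
          (forall k, abs (iter k F z0) = c))]).
Proof.
move=> F; split; first exact: part1.
exact: part2.
Qed.

End Abs2.

Theorem lemma2p3 (K : fieldType) (R : realType) (abs : K -> R)
  (habs : ultrametric_abs abs) (hcompl : abs_complete abs)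
  (p : nat) (hp : prime p) (hres : abs (p%:R : K) < 1)
  (lam : K) (hlam : abs lam = 1)
  (q : nat) (hq0 : (0 < q)%N) (hq : abs (lam ^+ q - 1) < 1)
  (hqmin : forall k, (0 < k < q)%N -> ~ (abs (lam ^+ k - 1) < 1))
  (f : series K) (hfint : integral abs f) (hf0 : f 0%N = 0) (hf1 : f 1%N = lam) :
  let F := ps_eval abs f in
  (* (1) *)
  (lam ^+ q != 1 ->
   forall w0, abs w0 < 1 -> min_period F w0 q -> (q = 1%N -> w0 != 0) ->
   let c := abs (lam ^+ q - 1) `^ (q%:R^-1) in
   [/\ c <= abs w0,
       (abs w0 = c <-> wideg_eq abs (fun k => siter f q k - sX K k) q.+1) &
       (abs w0 = c ->
          (forall w, abs w < 1 -> w != 0 -> min_period F w q ->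
             exists k, w = iter k F w0) /\
          (forall k, abs (iter k F w0) = c))]) /\
  (* (2) *)
  (forall n : nat, (1 <= n)%N -> lam ^+ (q * p ^ n) != 1 ->
   forall z0, abs z0 < 1 -> min_period F z0 (q * p ^ n) ->
   let c := abs ((lam ^+ (q * p ^ n) - 1) / (lam ^+ (q * p ^ n.-1) - 1))
              `^ ((q * p ^ n)%:R^-1) in
   [/\ c <= abs z0,
       (forall h : series K, integral abs h ->
          (fun k => siter f (q * p ^ n) k - sX K k) =
            smul h (fun k => siter f (q * p ^ n.-1) k - sX K k) ->
          (abs z0 = c <-> wideg_eq abs h (q * p ^ n))) &
       (abs z0 = c ->
          (forall z, abs z < 1 -> min_period F z (q * p ^ n) ->
             exists k, z = iter k F z0) /\
          (forall k, abs (iter k F z0) = c))]).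

Proof.
have hN1 := Pre.absN1_of habs (prime_gt0 hp) hres.
exact: (main_in habs hN1 hcompl hp hlam hq0 hfint hf0 hf1).
Qed.
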